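(* Assume the setting and the nsCRAIG recurrence described in the context, and let $k\ge1$ be such that $q_1,\dots,q_k$, $v_j,t_j,r_j,\alpha_j$ ($j\le k$), $\beta_2,\dots,\beta_k$ and $g_k$ are defined. With $V_k=[v_1,\dots,v_k]$, $T_k=[t_1,\dots,t_k]$, $D_k=[r_1/\alpha_1,\dots,r_k/\alpha_k]$ and $L_k=V_k^TMV_k+D_k^TT_k$, one has $Q_k=D_kB_k$, $AQ_k=MV_kB_k$, $CQ_k=T_kB_k$, $Q_k^TNQ_k=I_k$, $A^TV_k+T_k=NQ_kH_k+Ng_ke_k^T$, and $H_k=B_k^TL_k^T$ where $L_k$ is unit lower triangular. Consequently, with $S=A^TM^{-1}A+C$, $N^{-1}SQ_k=Q_k(H_kB_k)+\alpha_kg_ke_k^T$, i.e. the recurrence implicitly performs the Arnoldi reduction of the preconditioned Schur complement to upper Hessenberg form $H_kB_k$.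
   Context: Setting: $M\in\mathbb{R}^{m\times m}$ is nonsymmetric and positive definite ($x^TMx>0$ for all $x\ne0$); $A\in\mathbb{R}^{m\times n}$ ($n\le m$) has full column rank; $C\in\mathbb{R}^{n\times n}$ is symmetric positive semidefinite; $b\in\mathbb{R}^n$ is nonzero; $N\in\mathbb{R}^{n\times n}$ is symmetric positive definite. Write $\|x\|_G=(x^TGx)^{1/2}$ for $G$ positive definite (for nonsymmetric $M$ this is the norm of its symmetric part). The generalized saddle point system is $Mu+Ap=0$, $A^Tu-Cp=b$, with unique solution $(u_*,p_* )$; $S=A^TM^{-1}A+C$. nsCRAIG recurrence (exact arithmetic): Initialization: $\beta_1=\|b\|_{N^{-1}}$, $q_1=N^{-1}b/\beta_1$, $Q_1=[q_1]$, $r_1=q_1$, $w_1=M^{-1}Aq_1$, $s_1=Cr_1$, $\alpha_1=(w_1^TMw_1+r_1^Ts_1)^{1/2}$, $v_1=w_1/\alpha_1$, $t_1=s_1/\alpha_1$, $\chi_1=\beta_1/\alpha_1$. For $k=1,2,\dots$: $\hat g_k=N^{-1}(A^Tv_k+t_k)$, $h_k=Q_k^TN\hat g_k\in\mathbb{R}^k$, $g_k=\hat g_k-Q_kh_k$, $\beta_{k+1}=\|g_k\|_N$; if $\beta_{k+1}=0$ the recurrence stops; otherwise $q_{k+1}=g_k/\beta_{k+1}$, $Q_{k+1}=[Q_k,q_{k+1}]$, $w_{k+1}=M^{-1}Aq_{k+1}-\beta_{k+1}v_k$, $r_{k+1}=q_{k+1}-(\beta_{k+1}/\alpha_k)r_k$,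 $s_{k+1}=Cr_{k+1}$, $\alpha_{k+1}=(w_{k+1}^TMw_{k+1}+r_{k+1}^Ts_{k+1})^{1/2}$, $v_{k+1}=w_{k+1}/\alpha_{k+1}$, $t_{k+1}=s_{k+1}/\alpha_{k+1}$, $\chi_{k+1}=-(\beta_{k+1}/\alpha_{k+1})\chi_k$. Matrices: $B_k\in\mathbb{R}^{k\times k}$ upper bidiagonal with $(B_k)_{ii}=\alpha_i$, $(B_k)_{i,i+1}=\beta_{i+1}$; $H_k\in\mathbb{R}^{k\times k}$ upper Hessenberg whose $j$-th column has entries $(H_k)_{ij}=(h_j)_i$ for $i\le j$, $(H_k)_{j+1,j}=\beta_{j+1}$ (if $j<k$), and zeros otherwise. The nsCRAIG iterates at step $k$ are $y_k=-B_k^{-1}H_k^{-1}(\beta_1e_1)$, $p^{(k)}=Q_ky_k$, $u^{(k)}=-M^{-1}Ap^{(k)}$, with $e_1$ the first unit vector of $\mathbb{R}^k$; $e_k$ denotes the $k$-th unit vector of $\mathbb{R}^k$. *)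

(* Defs.v *)
From HB Require Import structures.
From mathcomp Require Import all_boot all_order all_algebra.
Set Implicit Arguments. Unset Strict Implicit. Unset Printing Implicit Defensive.
Import Order.TTheory GRing.Theory Num.Theory.
Local Open Scope ring_scope.

Section NsCRAIG.
Variable R : rcfType.
Variables m n : nat.
Variable M : 'M[R]_m.
Variable A : 'M[R]_(m, n).
Variable C : 'M[R]_n.
Variable N : 'M[R]_n.
Variable b : 'cV[R]_n.

Definition Gnorm p (G : 'M[R]_p) (x : 'cV[R]_p) : R :=
  Num.sqrt ((x^T *m G *m x) 0 0).

Record stepdata := StepData {
  sd_q : 'cV[R]_n; sd_w : 'cV[R]_m; sd_r : 'cV[R]_n; sd_s : 'cV[R]_n;
  sd_alpha : R; sd_v : 'cV[R]_m; sd_t : 'cV[R]_n; sd_beta : R }.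

Definition init_step : stepdata :=
  let b1 := Gnorm (invmx N) b in
  let q1 := b1^-1 *: (invmx N *m b) in
  let r1 := q1 in
  let w1 := invmx M *m (A *m q1) in
  let s1 := C *m r1 in
  let a1 := Num.sqrt ((w1^T *m M *m w1) 0 0 + (r1^T *m s1) 0 0) in
  StepData q1 w1 r1 s1 a1 (a1^-1 *: w1) (a1^-1 *: s1) b1.

Definition next_step (hs : seq stepdata) : stepdata :=
  let lst := last init_step hs in
  let gh := invmx N *m (A^T *m sd_v lst + sd_t lst) in
  let g := gh - \sum_(x <- hs) ((sd_q x)^T *m N *m gh) 0 0 *: sd_q x in
  let bt := Gnorm N g in
  let q' := bt^-1 *: g in
  let w' := invmx M *m (A *m q') - bt *: sd_v lst in
  let r' := q' - (bt / sd_alpha lst) *: sd_r lst in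
  let s' := C *m r' in
  let a' := Num.sqrt ((w'^T *m M *m w') 0 0 + (r'^T *m s') 0 0) in
  StepData q' w' r' s' a' (a'^-1 *: w') (a'^-1 *: s') bt.

(* hist k = [:: data_1; ...; data_{k+1}] *)
Fixpoint hist (k : nat) : seq stepdata :=
  match k with
  | 0 => [:: init_step]
  | k'.+1 => rcons (hist k') (next_step (hist k'))
  end.

(* data of step j (1-indexed, j >= 1) *)
Definition sd (j : nat) : stepdata := last init_step (hist j.-1).

Definition qv j := sd_q (sd j).
Definition wv j := sd_w (sd j).
Definition rv j := sd_r (sd j).
Definition sv j := sd_s (sd j).
Definition alpha j := sd_alpha (sd j).
Definition vv j := sd_v (sd j).
Definition tv j := sd_t (sd j).
Definition beta j := sd_beta (sd j).

Definition ghat j : 'cV[R]_n := invmx N *m (A^T *m vv j + tv j).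
Definition hcoef j i : R := ((qv i)^T *m N *m ghat j) 0 0.
Definition gv j : 'cV[R]_n :=
  ghat j - \sum_(1 <= i < j.+1) hcoef j i *: qv i.

(* matrices (column index jj : 'I_k corresponds to the 1-indexed jj.+1) *)
Definition Qk k : 'M[R]_(n, k) := \matrix_(i < n, jj < k) qv jj.+1 i 0.
Definition Vk k : 'M[R]_(m, k) := \matrix_(i < m, jj < k) vv jj.+1 i 0.
Definition Tk k : 'M[R]_(n, k) := \matrix_(i < n, jj < k) tv jj.+1 i 0.
Definition Dk k : 'M[R]_(n, k) :=
  \matrix_(i < n, jj < k) (rv jj.+1 i 0 / alpha jj.+1).
Definition Bk k : 'M[R]_k :=
  \matrix_(ii < k, jj < k)
    (if ii == jj :> nat then alpha ii.+1
     else if jj == ii.+1 :> nat then beta jj.+1 else 0).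
Definition Hk k : 'M[R]_k :=
  \matrix_(ii < k, jj < k)
    (if (ii <= jj)%N then hcoef jj.+1 ii.+1
     else if ii == jj.+1 :> nat then beta jj.+1.+1 else 0).
Definition Lk k : 'M[R]_k := (Vk k)^T *m M *m Vk k + (Dk k)^T *m Tk k.

End NsCRAIG.

Definition ek (R : rcfType) (k : nat) : 'cV[R]_k :=
  \col_(i < k) (if i == k.-1 :> nat then 1 else 0).

Definition unit_lower_trig (R : rcfType) k (L : 'M[R]_k) : Prop :=
  is_trig_mx L /\ (forall i : 'I_k, L i i = 1).

Definition posdef (R : rcfType) p (G : 'M[R]_p) : Prop :=
  forall x : 'cV[R]_p, x != 0 -> 0 < (x^T *m G *m x) 0 0.
Definition possemidef (R : rcfType) p (G : 'M[R]_p) : Prop :=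
  forall x : 'cV[R]_p, 0 <= (x^T *m G *m x) 0 0.

(* Main.v *)
Require Import Defs.
From HB Require Import structures.
From mathcomp Require Import all_boot all_order all_algebra.
From mathcomp Require Import zify ring.
Import Order.TTheory GRing.Theory Num.Theory.
Local Open Scope ring_scope.
Set Implicit Arguments. Unset Strict Implicit. Unset Printing Implicit Defensive.

Section Sums.
Variable V : zmodType.

Lemma sum_pick_nat (lo hi c : nat) (a : V) : (lo <= c < hi)%N ->
  \sum_(lo <= l < hi) (if l == c then a else 0) = a.
Proof.
move=> /andP[h1 h2].
rewrite (big_cat_nat _ (n := c)) ?(ltnW h2) //= [\sum_(c <= i < hi) _]big_ltn // eqxx !big1_seq ?addr0 ?add0r //.
- by move=> l /andP[_]; rewrite mem_index_iota => /andP[? ?]; case: eqP => // e; lia.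
- by move=> l /andP[_]; rewrite mem_index_iota => /andP[? ?]; case: eqP => // e; lia.
Qed.

Lemma sum_pick k (c : nat) (a : V) : (c < k)%N ->
  \sum_(l < k) (if (l : nat) == c then a else 0) = a.
Proof.
move=> hc; rewrite -(big_mkord xpredT (fun l => if l == c then a else 0)).
by apply: sum_pick_nat; rewrite hc.
Qed.

Lemma sum_pick0 k (c : nat) (a : V) : (k <= c)%N ->
  \sum_(l < k) (if (l : nat) == c then a else 0) = 0.
Proof. move=> hc; apply: big1 => l _; case: eqP => // e. have := ltn_ord l. lia. Qed.

Lemma sum_le k (jj : nat) (f : nat -> V) : (jj < k)%N ->
  \sum_(l < k) (if (l <= jj)%N then f l else 0) = \sum_(0 <= l < jj.+1) f l.
Proof.
move=> hj; rewrite -(big_mkord xpredT (fun l => if (l <= jj)%N then f l else 0)).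
rewrite (big_cat_nat _ (n := jj.+1)) //= [X in _ + X]big1_seq ?addr0.
  by apply: eq_big_nat => l /andP[_ hl]; rewrite -ltnS hl.
move=> l /andP[_]; rewrite mem_index_iota => /andP[h _]; case: ifP => // e; lia.
Qed.
End Sums.

Lemma unit_posdef (R : rcfType) p (X : 'M[R]_p) : posdef X -> X \in unitmx.
Proof.
move=> hX; rewrite -row_free_unit -kermx_eq0; apply/eqP/row_matrixP => i.
rewrite row0; set u := row i (kermx X).
have hu : u *m X = 0 by apply/sub_kermxP; exact: row_sub.
case: (eqVneq u 0) => // nz.
have := hX u^T; rewrite trmx_eq0 trmxK hu mul0mx mxE ltxx => /(_ nz) //.
Qed.

Lemma mx11_tr (R : nzRingType) (X : 'M[R]_1) : X^T 0 0 = X 0 0.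
Proof. by rewrite mxE. Qed.

Lemma mxZ (R : nzRingType) p q (a : R) (X : 'M[R]_(p,q)) i j : (a *: X) i j = a * X i j.
Proof. by rewrite mxE. Qed.

Section Mx.
Variable R : fieldType.

Lemma mul_colmx p q k (X : 'M[R]_(p,q)) (F : nat -> 'cV[R]_q) :
  X *m (\matrix_(i<q, l<k) F l.+1 i 0) = \matrix_(i<p, l<k) (X *m F l.+1) i 0.
Proof. apply/matrixP => i l; rewrite !mxE; apply: eq_bigr => j _; rewrite ?mxE; congr (_ * F _ _ _); exact: val_inj. Qed.

Lemma tr_mul_colmx p k1 k2 (F G : nat -> 'cV[R]_p) :
  (\matrix_(i<p,l<k1) F l.+1 i 0)^T *m (\matrix_(i<p,l<k2) G l.+1 i 0)
  = \matrix_(i<k1,j<k2) ((F i.+1)^T *m G j.+1) 0 0.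
Proof. apply/matrixP => i j; rewrite !mxE; apply: eq_bigr => l _; rewrite !mxE; by congr (F _ _ _ * G _ _ _); apply: val_inj. Qed.

Lemma eq_colmx p k (F G : nat -> 'cV[R]_p) :
  (forall j, (0 < j <= k)%N -> F j = G j) ->
  \matrix_(i<p,l<k) F l.+1 i 0 = \matrix_(i<p,l<k) G l.+1 i 0.
Proof. move=> h; apply/matrixP => i l; rewrite !mxE h //; have := ltn_ord l; lia. Qed.
Lemma add_colmx p k (F G : nat -> 'cV[R]_p) :
  \matrix_(i<p,l<k) F l.+1 i 0 + \matrix_(i<p,l<k) G l.+1 i 0
  = \matrix_(i<p,l<k) (F l.+1 + G l.+1) i 0.
Proof. by apply/matrixP => i l; rewrite !mxE. Qed.

Lemma mul_ekT (R' : rcfType) p k (x : 'cV[R']_p) :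
  x *m (ek R' k)^T = \matrix_(i<p,l<k) (if l.+1 == k then x else 0) i 0.
Proof.
apply/matrixP => i l; rewrite !mxE big_ord1 !mxE.
have := ltn_ord l; case: eqP => e; case: eqP => e' hl; rewrite ?mulr1 ?mulr0 ?mxE //; lia.
Qed.
Lemma tr_mul_col p k1 (F : nat -> 'cV[R]_p) (x : 'cV[R]_p) :
  (\matrix_(i<p,l<k1) F l.+1 i 0)^T *m x = \col_(i<k1) ((F i.+1)^T *m x) 0 0.
Proof. apply/matrixP => i j; rewrite (ord1 j) !mxE; apply: eq_bigr => l _; rewrite !mxE //. Qed.
End Mx.

Section Proof.
Variable R : rcfType.
Variables m n : nat.
Variable M : 'M[R]_m.
Variable A : 'M[R]_(m, n).
Variable C : 'M[R]_n.
Variable N : 'M[R]_n.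
Variable b : 'cV[R]_n.

Local Notation sd := (sd M A C N b).
Local Notation hist := (hist M A C N b).
Local Notation q := (qv M A C N b).
Local Notation w := (wv M A C N b).
Local Notation r := (rv M A C N b).
Local Notation s := (sv M A C N b).
Local Notation al := (alpha M A C N b).
Local Notation be := (beta M A C N b).
Local Notation v := (vv M A C N b).
Local Notation t := (tv M A C N b).
Local Notation g := (gv M A C N b).
Local Notation gh := (ghat M A C N b).
Local Notation hc := (hcoef M A C N b).

Lemma hist_eq k : hist k = [seq sd j | j <- iota 1 k.+1].
Proof.
elim: k => [|k IH] //.
rewrite (_ : k.+2 = k.+1 + 1)%N; last by rewrite addn1.
rewrite iotaD map_cat -IH /= cats1; congr rcons.
by rewrite /Defs.sd add1n /= last_rcons.
Qed.

Lemma sd_succ j : (0 < j)%N -> sd j.+1 = next_step M A C N b (hist j.-1).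
Proof. by case: j => // j _; rewrite /Defs.sd /= last_rcons. Qed.

Lemma sum_hist j (F : stepdata R m n -> 'cV[R]_n) : (0 < j)%N ->
  \sum_(x <- hist j.-1) F x = \sum_(1 <= i < j.+1) F (sd i).
Proof.
case: j => // j _; rewrite hist_eq big_map /index_iota subSS subn0 //.
Qed.

Lemma q_succ j : (0 < j)%N -> q j.+1 = (be j.+1)^-1 *: g j.
Proof. move=> hj. rewrite /qv /beta sd_succ // /next_step /= sum_hist //. Qed.


Lemma w_succ j : (0 < j)%N -> w j.+1 = invmx M *m (A *m q j.+1) - be j.+1 *: v j.
Proof. move=> hj. rewrite /wv /qv /beta /vv sd_succ // /next_step /= sum_hist //. Qed.
Lemma r_succ j : (0 < j)%N -> r j.+1 = q j.+1 - (be j.+1 / al j) *: r j.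
Proof. move=> hj. rewrite /rv /qv /beta /alpha sd_succ // /next_step /= sum_hist //. Qed.
Lemma be_succ j : (0 < j)%N -> be j.+1 = Gnorm N (g j).
Proof. move=> hj. rewrite /beta sd_succ // /next_step /= sum_hist //. Qed.

Lemma sd_cases j : sd j = init_step M A C N b \/ exists hs, sd j = next_step M A C N b hs.
Proof.
case: j => [|[|j]]; [by left|by left|right].
by exists (hist j); rewrite sd_succ.
Qed.

Lemma s_eq j : s j = C *m r j.
Proof. by rewrite /sv /rv; case: (sd_cases j) => [->|[hs ->]]. Qed.
Lemma v_eq j : v j = (al j)^-1 *: w j.
Proof. by rewrite /vv /wv /alpha; case: (sd_cases j) => [->|[hs ->]]. Qed.
Lemma t_eq j : t j = (al j)^-1 *: s j.
Proof. by rewrite /tv /sv /alpha; case: (sd_cases j) => [->|[hs ->]]. Qed.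
Lemma al_eq j : al j = Num.sqrt (((w j)^T *m M *m w j) 0 0 + ((r j)^T *m s j) 0 0).
Proof. by rewrite /wv /sv /rv /alpha; case: (sd_cases j) => [->|[hs ->]]. Qed.

Lemma q_1 : q 1 = (be 1)^-1 *: (invmx N *m b).
Proof. by []. Qed.
Lemma be_1 : be 1 = Gnorm (invmx N) b.
Proof. by []. Qed.
Lemma r_1 : r 1 = q 1.
Proof. by []. Qed.
Lemma w_1 : w 1 = invmx M *m (A *m q 1).
Proof. by []. Qed.


Variable k : nat.
Local Notation B := (Bk M A C N b k).

Lemma mulB p (G : 'I_p -> nat -> R) :
  (\matrix_(i<p, l<k) G i l) *m B =
  \matrix_(i<p, jj<k) (al jj.+1 * G i jj + (if (0 < jj)%N then be jj.+1 * G i jj.-1 else 0)).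
Proof.
apply/matrixP => i jj; rewrite !mxE.
rewrite (eq_bigr (fun l : 'I_k => (if (l:nat) == jj then al jj.+1 * G i jj else 0)
   + (if (0 < jj)%N then (if (l:nat) == jj.-1 then be jj.+1 * G i jj.-1 else 0) else 0))).
  rewrite big_split /= sum_pick //; case: ifP => h; last by rewrite big1.
  by rewrite sum_pick //; have := ltn_ord jj; lia.
move=> l _; rewrite !mxE.
have [e|ne] := eqVneq (l:nat) jj.
  rewrite e; case: ifP => h; last by rewrite addr0 mulrC.
  have -> : (jj == jj.-1 :> nat) = false by apply/eqP; lia.
  by rewrite addr0 mulrC.
rewrite ?(negbTE ne) add0r.
have [e2|ne2] := eqVneq (jj:nat) l.+1.
  have -> : (0 < jj)%N by lia.
  have -> : ((l:nat) == jj.-1) by apply/eqP; lia.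
  by rewrite mulrC e2.
case: ifP => h; rewrite ?mulr0 //.
have -> : ((l:nat) == jj.-1) = false by apply/eqP; lia.
by [].
Qed.


Hypothesis hMpd : posdef M.
Hypothesis hNs : N^T = N.
Hypothesis hNpd : posdef N.
Hypothesis hCs : C^T = C.
Hypothesis hb : b != 0.

Definition ip (x y : 'cV[R]_n) := (x^T *m N *m y) 0 0.

Lemma ipC x y : ip x y = ip y x.
Proof.
by rewrite /ip -[LHS]mx11_tr !trmx_mul trmxK hNs mulmxA.
Qed.
Lemma ipDr x y z : ip x (y + z) = ip x y + ip x z.
Proof. by rewrite /ip mulmxDr mxE. Qed.
Lemma ipBr x y z : ip x (y - z) = ip x y - ip x z.
Proof. by rewrite /ip mulmxBr !mxE. Qed.
Lemma ipZr x a y : ip x (a *: y) = a * ip x y.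
Proof. by rewrite /ip -scalemxAr mxE. Qed.
Lemma ipZl x a y : ip (a *: x) y = a * ip x y.
Proof. by rewrite ipC ipZr ipC. Qed.
Lemma ip_sumr x (lo hi : nat) (F : nat -> 'cV[R]_n) :
  ip x (\sum_(lo <= l < hi) F l) = \sum_(lo <= l < hi) ip x (F l).
Proof. by rewrite /ip mulmx_sumr summxE. Qed.

Lemma MU : M \in unitmx. Proof. exact: unit_posdef. Qed.
Lemma NU : N \in unitmx. Proof. exact: unit_posdef. Qed.

Lemma sqrt_sq (a : R) : Num.sqrt a != 0 -> Num.sqrt a ^+ 2 = a.
Proof.
move=> h; apply: sqr_sqrtr; move: h; rewrite sqrtr_eq0 -ltNge; exact: ltW.
Qed.

Lemma g_orth j : (1 <= j)%N ->
  (forall i i', (1 <= i <= j)%N -> (1 <= i' <= j)%N -> ip (q i) (q i') = (i == i')%:R) ->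
  forall i, (1 <= i <= j)%N -> ip (q i) (g j) = 0.
Proof.
move=> hj ho i hi; rewrite /gv ipBr ip_sumr.
rewrite (eq_big_nat _ _ (F2 := fun l => if l == i then hc j i else 0)).
  by rewrite sum_pick_nat ?subrr.
move=> l hl; rewrite ipZr ho //.
by case: eqP => [->|ne]; case: eqP => //; rewrite ?mulr1 ?mulr0 // => e; subst.
Qed.

Lemma ip_b : ip (invmx N *m b) (invmx N *m b) = (b^T *m invmx N *m b) 0 0.
Proof.
by rewrite /ip trmx_mul trmx_inv hNs -!mulmxA mulKVmx ?NU.
Qed.

Lemma be1_nz : be 1 != 0.
Proof.
rewrite be_1 /Gnorm sqrtr_eq0 -ltNge -ip_b; apply: hNpd.
apply: contra hb => /eqP h; apply/eqP; by rewrite -(mulKVmx NU b) h mulmx0.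
Qed.

Lemma ip11 : ip (q 1) (q 1) = 1.
Proof.
have h := be1_nz.
have e : (b^T *m invmx N *m b) 0 0 = be 1 ^+ 2.
  by move: (h); rewrite be_1 /Gnorm => h'; rewrite sqrt_sq.
rewrite q_1 ipZl ipZr ip_b e; field; done.
Qed.

Hypothesis hk : (0 < k)%N.
Hypothesis hbe : forall j, (2 <= j <= k)%N -> be j != 0.
Hypothesis hal : forall j, (1 <= j <= k)%N -> al j != 0.

Lemma be_sq j : (1 <= j)%N -> (j < k)%N -> ip (g j) (g j) = be j.+1 ^+ 2.
Proof.
move=> h1 h2; have hbj : be j.+1 != 0 by apply: hbe; lia.
by move: hbj; rewrite be_succ // /Gnorm => hbj; rewrite sqrt_sq.
Qed.

Lemma ortho j : (1 <= j <= k)%N -> forall i i', (1 <= i <= j)%N -> (1 <= i' <= j)%N ->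
  ip (q i) (q i') = (i == i')%:R.
Proof.
elim: j => [|j IH] // /andP[h1 h2] i i' hi hi'.
case: (posnP j) => [j0|jpos].
  subst; have -> : i = 1%N by lia.
  have -> : i' = 1%N by lia.
  exact: ip11.
have IH' := IH (ltac:(lia)).
have hbj : be j.+1 != 0 by apply: hbe; lia.
have hg := be_sq jpos h2.
have hqg : forall i, (1 <= i <= j)%N -> ip (q i) (q j.+1) = 0.
  move=> i0 hi0; rewrite q_succ // ipZr (g_orth jpos IH') ?mulr0 //.
have [ei|ni] := eqVneq i j.+1; have [ei'|ni'] := eqVneq i' j.+1.
- subst; rewrite eqxx q_succ // ipZl ipZr hg /=; field; done.
- subst; rewrite ipC hqg; last by lia.
  by rewrite (_ : (j.+1 == i') = false) //; apply/eqP; lia.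
- subst; rewrite hqg; last by lia.
  by rewrite (_ : (i == j.+1) = false) //; apply/eqP; lia.
- by apply: IH'; lia.
Qed.

Definition Bcol p (F : nat -> 'cV[R]_p) j :=
  al j *: F j + (if (1 < j)%N then be j *: F j.-1 else 0).
Definition Dcol j := (al j)^-1 *: r j.

Lemma mulBc p (F : nat -> 'cV[R]_p) :
  (\matrix_(i<p,l<k) F l.+1 i 0) *m B = \matrix_(i<p,l<k) (Bcol F l.+1) i 0.
Proof.
rewrite (mulB (fun i l => F l.+1 i 0)); apply/matrixP => i jj; rewrite /Bcol !mxE.
by case: jj => [[|j] hj] /=; rewrite !mxE.
Qed.

Lemma D_eq : Dk M A C N b k = \matrix_(i<n,l<k) (Dcol l.+1) i 0.
Proof. by apply/matrixP => i l; rewrite !mxE mulrC. Qed.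

Lemma colD j : (1 <= j <= k)%N -> q j = Bcol Dcol j.
Proof.
move=> hj; rewrite /Bcol /Dcol scalerA mulfV ?hal // scale1r.
case: j hj => [|[|j]] hj //=; first by rewrite addr0 r_1.
by rewrite r_succ // scalerA subrK.
Qed.

Lemma colV j : (1 <= j <= k)%N -> A *m q j = M *m Bcol v j.
Proof.
move=> hj; rewrite /Bcol v_eq scalerA mulfV ?hal // scale1r.
case: j hj => [|[|j]] hj //=; first by rewrite addr0 w_1 mulKVmx ?MU.
by rewrite w_succ // subrK mulKVmx ?MU.
Qed.

Lemma colT j : (1 <= j <= k)%N -> C *m q j = Bcol t j.
Proof.
move=> hj; rewrite /Bcol t_eq scalerA mulfV ?hal // scale1r s_eq.
case: j hj => [|[|j]] hj //=; first by rewrite addr0 r_1.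
rewrite t_eq s_eq scalerA scalemxAr -mulmxDr; congr (_ *m _).
by rewrite r_succ // subrK.
Qed.

Local Notation Q := (Qk M A C N b k).
Local Notation V := (Vk M A C N b k).
Local Notation T := (Tk M A C N b k).
Local Notation D := (Dk M A C N b k).
Local Notation H := (Hk M A C N b k).
Local Notation L := (Lk M A C N b k).

Lemma resA : Q = D *m B.
Proof. by rewrite D_eq mulBc; apply: eq_colmx => j hj; apply: colD. Qed.
Lemma resB : A *m Q = M *m V *m B.
Proof.
rewrite -mulmxA mulBc !mul_colmx.
by apply: (eq_colmx (F := fun j => A *m q j) (G := fun j => M *m Bcol v j)) => j hj; apply: colV.
Qed.
Lemma resC : C *m Q = T *m B.
Proof.
rewrite mulBc mul_colmx.
by apply: (eq_colmx (F := fun j => C *m q j) (G := fun j => Bcol t j)) => j hj; apply: colT.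
Qed.
Lemma resD : Q^T *m N *m Q = 1%:M.
Proof.
rewrite -mulmxA mul_colmx (@tr_mul_colmx _ _ _ _ q (fun j => N *m q j)).
apply/matrixP => i j; rewrite [LHS]mxE [RHS]mxE mulmxA.
have := @ortho k _ i.+1 j.+1; rewrite /ip => ->; first by [].
- by rewrite hk leqnn.
- by rewrite ltn_ord.
- by rewrite ltn_ord.
Qed.

Lemma gh_def j : N *m gh j = A^T *m v j + t j.
Proof. by rewrite /ghat mulKVmx ?NU. Qed.

Lemma g_def j : g j = gh j - \sum_(1 <= i < j.+1) hc j i *: q i.
Proof. by []. Qed.

Local Opaque qv vv tv rv wv sv hcoef ghat gv alpha beta.

Definition QHcol j := \sum_(1 <= l < j.+1) hc j l *: q l
   + (if (j < k)%N then be j.+1 *: q j.+1 else 0).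

Lemma mulH : Q *m H = \matrix_(i<n,l<k) (QHcol l.+1) i 0.
Proof.
apply/matrixP => i jj; rewrite [LHS]mxE [RHS]mxE /QHcol mxE summxE.
rewrite (eq_bigr (fun l : 'I_k => (if (l <= jj)%N then hc jj.+1 l.+1 * q l.+1 i 0 else 0)
   + (if (l : nat) == jj.+1 then be jj.+2 * q jj.+2 i 0 else 0))); last first.
  move=> l _. rewrite !mxE. case: leqP => h.
    by rewrite (_ : (l == jj.+1 :> nat) = false) ?addr0 1?mulrC //; apply/eqP; lia.
  by case: eqP => [e|ne]; rewrite ?add0r ?mulr0 // e mulrC.
rewrite big_split /= (@sum_le _ _ _ (fun l => hc jj.+1 l.+1 * q l.+1 i 0)) ?ltn_ord // big_add1 /=.
congr (_ + _).
  by apply: eq_bigr => l _; rewrite mxE.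
case: ifP => h; first by rewrite sum_pick // mxE.
by rewrite sum_pick0 ?mxE //; lia.
Qed.


Lemma col_gh j : (1 <= j <= k)%N -> gh j = QHcol j + (if j == k then g k else 0).
Proof.
move=> hj; have e : gh j = \sum_(1 <= l < j.+1) hc j l *: q l + g j.
  by rewrite g_def addrC subrK.
rewrite e /QHcol -addrA.
congr (_ + _).
have [ejk|njk] := eqVneq j k.
  by rewrite ejk ltnn add0r.
rewrite (_ : (j < k)%N) ?addr0; last by lia.
rewrite q_succ ?scalerA ?mulfV ?scale1r //; last by lia.
by apply: hbe; lia.
Qed.




Lemma resE : A^T *m V + T = N *m Q *m H + N *m g k *m (ek R k)^T.
Proof.
rewrite mul_colmx (@add_colmx _ _ _ (fun j => A^T *m v j) t).
rewrite -mulmxA mulH mul_colmx mul_ekT (@add_colmx _ _ _ (fun j => N *m QHcol j) (fun j => if j == k then N *m g k else 0)).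
apply: (eq_colmx (F := fun j => A^T *m v j + t j)
   (G := fun j => N *m QHcol j + (if j == k then N *m g k else 0))) => j hj.
rewrite -gh_def col_gh // mulmxDr; congr (_ + _).
by case: (j == k); rewrite ?mulmx0.
Qed.



Lemma QtNg : Q^T *m N *m g k = 0.
Proof.
rewrite -mulmxA tr_mul_col; apply/matrixP => i j; rewrite [LHS]mxE [RHS]mxE mulmxA.
have := @g_orth k hk (@ortho k _) i.+1; rewrite /ip => ->; first by [].
- by rewrite hk leqnn.
- by rewrite ltn_ord.
Qed.

Lemma DtT : D^T *m T = T^T *m D.
Proof.
rewrite D_eq (@tr_mul_colmx _ _ _ _ Dcol t) (@tr_mul_colmx _ _ _ _ t Dcol).
apply/matrixP => i j; rewrite [LHS]mxE [RHS]mxE /Dcol !t_eq !s_eq.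
rewrite !linearZ /= -!scalemxAl trmx_mul hCs !mulmxA.
by congr (fun_of_matrix _ _ _); apply: val_inj.
Qed.

Lemma resF : H = B^T *m L^T.
Proof.
have e : Q^T *m (A^T *m V + T) = H.
  by rewrite resE mulmxDr !mulmxA resD mul1mx QtNg mul0mx addr0.
rewrite -e mulmxDr mulmxA -trmx_mul resB resA /Lk.
rewrite linearD /= !trmx_mul !trmxK -DtT !mulmxDr !mulmxA.
by [].
Qed.


Lemma eB : (ek R k)^T *m B = al k *: (ek R k)^T.
Proof.
apply/matrixP => i jj; rewrite (ord1 i) !mxE.
rewrite (eq_bigr (fun l : 'I_k => if (l:nat) == k.-1 then
    (if k.-1 == jj :> nat then al k else 0) else 0)); last first.
  move=> l _; rewrite !mxE; case: eqP => e; last by rewrite mul0r.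
  rewrite mul1r e prednK //; case: eqP => // _.
  by rewrite (_ : (jj == k :> nat) = false) //; apply/eqP; have := ltn_ord jj; lia.
rewrite sum_pick; last by lia.
by rewrite eq_sym; case: eqP; rewrite ?mulr1 ?mulr0.
Qed.

Lemma resH : invmx N *m (A^T *m invmx M *m A + C) *m Q
   = Q *m (H *m B) + al k *: (g k *m (ek R k)^T).
Proof.
have SQ : (A^T *m invmx M *m A + C) *m Q = (A^T *m V + T) *m B.
  rewrite mulmxDl resC mulmxDl; congr (_ + _).
  by rewrite -!mulmxA resB -!mulmxA mulKmx ?MU // mulmxA.
rewrite -mulmxA SQ resE mulmxDl mulmxDr -!mulmxA !mulKmx ?NU //.
by rewrite eB -scalemxAr.
Qed.

Lemma L_entry (i j : 'I_k) : L i j = ((v i.+1)^T *m M *m v j.+1) 0 0 + ((Dcol i.+1)^T *m t j.+1) 0 0.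
Proof.
rewrite /Lk -mulmxA mul_colmx (@tr_mul_colmx _ _ _ _ v (fun j => M *m v j)) D_eq.
rewrite (@tr_mul_colmx _ _ _ _ Dcol t) [LHS]mxE.
rewrite [X in X + _ = _]mxE [X in _ + X = _]mxE mulmxA.
by [].
Qed.

Lemma L_diag (i : 'I_k) : L i i = 1.
Proof.
have hi : (1 <= i.+1 <= k)%N by rewrite ltn_ord.
have ha := hal hi.
have hx : al i.+1 ^+ 2 = ((w i.+1)^T *m M *m w i.+1) 0 0 + ((r i.+1)^T *m s i.+1) 0 0.
  by move: (ha); rewrite {1}al_eq => h; rewrite {1}al_eq sqrt_sq.
rewrite L_entry /Dcol v_eq t_eq !linearZ /= -!scalemxAl.
rewrite !mxZ -!mulrDr -hx; field; done.
Qed.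



Lemma hL (a c : 'I_k) :
  H a c = al a.+1 * L c a + (if (0 < a)%N then be a.+1 * L c (insubd c a.-1) else 0).
Proof.
have -> : H a c = (L *m B) c a by rewrite resF -trmx_mul mxE.
have eL : L = \matrix_(i<k,l<k) L i (insubd i l).
  by apply/matrixP => i l; rewrite mxE valKd.
by rewrite [in LHS]eL (mulB (fun i l => L i (insubd i l))) mxE valKd.
Qed.

Lemma H_entry (a c : 'I_k) : H a c =
  if (a <= c)%N then hc c.+1 a.+1 else if a == c.+1 :> nat then be c.+2 else 0.
Proof. by rewrite mxE. Qed.

Lemma L_upper d : forall c a : 'I_k, (a : nat) = (c + d.+1)%N -> L c a = 0.
Proof.
elim: d => [|d IH] c a ha.
  have h := hL a c.
  rewrite H_entry in h.
  have e1 : (a <= c)%N = false by lia.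
  have e2 : (a == c.+1 :> nat) = true by apply/eqP; lia.
  rewrite e1 e2 in h.
  rewrite (_ : (0 < a)%N) in h; last by lia.
  rewrite (_ : a.-1 = c :> nat) ?valKd ?L_diag ?mulr1 in h; last by lia.
  rewrite (_ : (a : nat).+1 = c.+2) in h; last by lia.
  move/eqP: h; rewrite eq_sym -subr_eq0 addrK mulf_eq0 => /orP[h0|/eqP //].
  have hn : al c.+2 != 0 by apply: hal; have := ltn_ord a; lia.
  by rewrite (negbTE hn) in h0.
have h := hL a c.
rewrite H_entry in h.
have e1 : (a <= c)%N = false by lia.
have e2 : (a == c.+1 :> nat) = false by apply/eqP; lia.
rewrite e1 e2 in h.
rewrite (_ : (0 < a)%N) in h; last by lia.
rewrite (IH c (insubd c a.-1)) ?mulr0 ?addr0 in h; last first.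
  by rewrite val_insubd (_ : (a.-1 < k)%N); [lia | have := ltn_ord a; lia].
have : al a.+1 * L c a = 0 by rewrite -h.
move/eqP; rewrite mulf_eq0 => /orP[h0|/eqP //].
have hn : al a.+1 != 0 by apply: hal; have := ltn_ord a; lia.
by rewrite (negbTE hn) in h0.
Qed.

Lemma resG : unit_lower_trig L.
Proof.
split; last exact: L_diag.
apply/is_trig_mxP => i j hij; apply: (@L_upper (j - i).-1); lia.
Qed.


End Proof.

Theorem mainTheorem7 (R : rcfType) (m n : nat)
  (M : 'M[R]_m) (A : 'M[R]_(m, n)) (C N : 'M[R]_n) (b : 'cV[R]_n) (k : nat) :
  (n <= m)%N ->
  posdef M ->
  \rank A = n ->
  C^T = C -> possemidef C ->
  N^T = N -> posdef N ->
  b != 0 ->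
  (1 <= k)%N ->
  (* the recurrence has not stopped before step k and all quantities are defined *)
  (forall j, (2 <= j <= k)%N -> beta M A C N b j != 0) ->
  (forall j, (1 <= j <= k)%N -> alpha M A C N b j != 0) ->
  let Q := Qk M A C N b k in
  let V := Vk M A C N b k in
  let T := Tk M A C N b k in
  let D := Dk M A C N b k in
  let B := Bk M A C N b k in
  let H := Hk M A C N b k in
  let L := Lk M A C N b k in
  let g := gv M A C N b k in
  let S := A^T *m invmx M *m A + C in
  Q = D *m B /\
  A *m Q = M *m V *m B /\
  C *m Q = T *m B /\
  Q^T *m N *m Q = 1%:M /\
  A^T *m V + T = N *m Q *m H + N *m g *m (ek R k)^T /\
  H = B^T *m L^T /\ unit_lower_trig L /\
  invmx N *m S *m Q = Q *m (H *m B) + alpha M A C N b k *: (g *m (ek R k)^T).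
Proof.
move=> _ hM _ hCs _ hNs hN hb hk hbe hal Q V T D B H L g S.
split; first by apply: resA.
split; first by apply: resB.
split; first by apply: resC.
split; first by apply: resD.
split; first by apply: resE.
split; first by apply: resF.
split; first by apply: resG.
by apply: resH.
Qed.
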